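(* Let $(\mathcal{A},[-,-],\alpha)$ be a multiplicative Hom-Malcev superalgebra. Then for every $n\geq0$ the derived Hom-superalgebra $\mathcal{A}^{n}=(\mathcal{A},[-,-]^{(n)}=\alpha^{2^{n}-1}\circ[-,-],\alpha^{2^{n}})$ is also a Hom-Malcev superalgebra.
   Context: $\mathcal{A}=\mathcal{A}_0\oplus\mathcal{A}_1$ is a $\mathbb{Z}_2$-graded vector space over an algebraically closed field $\mathbb{K}$ of characteristic $0$; $|x|$ is the parity of homogeneous $x$; even maps preserve parity. For an even bilinear bracket $[-,-]$ and even linear $\alpha$, $\widetilde{J}(x,y,z)=[[x,y],\alpha(z)]-[\alpha(x),[y,z]]-(-1)^{|y||z|}[[x,z],\alpha(y)]$. A Hom-Malcev superalgebra is a triple $(\mathcal{A},[-,-],\alpha)$ with $\alpha\circ[-,-]=[-,-]\circ(\alpha\otimes\alpha)$, $[x,y]=-(-1)^{|x||y|}[y,x]$, and for all homogeneous $x,y,z,t$: $2[\alpha^{2}(t),\widetilde{J}(x,y,z)]=\widetilde{J}(\alpha(t),\alpha(x),[y,z])+(-1)^{|x|(|y|+|z|)}\widetilde{J}(\alpha(t),\alpha(y),[z,x])+(-1)^{|z|(|x|+|y|)}\widetilde{J}(\alpha(t),\alpha(z),[x,y])$. *)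

(* Defs.v *)
From HB Require Import structures.
From mathcomp Require Import all_boot all_order all_algebra.
Set Implicit Arguments. Unset Strict Implicit. Unset Printing Implicit Defensive.
Import Order.TTheory GRing.Theory Num.Theory.
Local Open Scope ring_scope.

(* A Z2-graded vector space A = A0 (+) A1 is modelled as the product
   A0 * A1 of two K-vector spaces.  An element x is homogeneous of parity
   b (false = even, true = odd) when its component of the other parity
   vanishes. *)
Section Super.
Variables (K : fieldType) (A0 A1 : lmodType K).
Local Notation A := (A0 * A1)%type.

Definition homog (b : bool) (x : A) : Prop :=
  if b then x.1 = 0 else x.2 = 0.

Definition sgn (n : nat) : K := (-1) ^+ n.

Definition bilinear_map (br : A -> A -> A) : Prop :=
  (forall x, linear (br x)) /\ (forall y, linear (fun x => br x y)).

Definition even_bracket (br : A -> A -> A) : Prop :=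
  forall (bx by' : bool) (x y : A), homog bx x -> homog by' y ->
    homog (bx (+) by') (br x y).

Definition even_map (f : A -> A) : Prop :=
  linear f /\ forall (b : bool) (x : A), homog b x -> homog b (f x).

Definition superJ (br : A -> A -> A) (alpha : A -> A)
  (by' bz : bool) (x y z : A) : A :=
  br (br x y) (alpha z) - br (alpha x) (br y z)
  - sgn (by' * bz) *: br (br x z) (alpha y).

Definition HomMalcevSuper (br : A -> A -> A) (alpha : A -> A) : Prop :=
  [/\ bilinear_map br, even_bracket br, even_map alpha &
   [/\
      (forall x y, alpha (br x y) = br (alpha x) (alpha y)),
      (forall (bx by' : bool) (x y : A), homog bx x -> homog by' y ->
          br x y = - (sgn (bx * by') *: br y x)) &
      (forall (bx by' bz bt : bool) (x y z t : A),
          homog bx x -> homog by' y -> homog bz z -> homog bt t ->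
          2%:R *: br (alpha (alpha t)) (superJ br alpha by' bz x y z) =
            superJ br alpha (bx) (by' (+) bz) (alpha t) (alpha x) (br y z)
          + sgn (bx * (by' + bz)) *:
              superJ br alpha by' (bz (+) bx) (alpha t) (alpha y) (br z x)
          + sgn (bz * (bx + by')) *:
              superJ br alpha bz (bx (+) by') (alpha t) (alpha z) (br x y))]].

Definition derived_bracket (br : A -> A -> A) (alpha : A -> A) (n : nat) :=
  fun x y => iter (2 ^ n - 1) alpha (br x y).
Definition derived_twist (alpha : A -> A) (n : nat) := iter (2 ^ n) alpha.

End Super.

(* Main.v *)
Require Import Defs.
From HB Require Import structures.
From mathcomp Require Import all_boot all_order all_algebra.
Import GRing.Theory.
Local Open Scope ring_scope.

Section Aux.
Variables (K : fieldType) (A0 A1 : lmodType K).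
Local Notation A := (A0 * A1)%type.

Lemma lin0 (f : A -> A) : linear f -> f 0 = 0.
Proof.
move=> lf; have h := lf 1 0 0; rewrite !scale1r addr0 in h.
by apply: (addrI (f 0)); rewrite addr0 -h.
Qed.

Lemma linD (f : A -> A) u v : linear f -> f (u + v) = f u + f v.
Proof. by move=> lf; have := lf 1 u v; rewrite !scale1r. Qed.

Lemma linZ (f : A -> A) a u : linear f -> f (a *: u) = a *: f u.
Proof. by move=> lf; rewrite -[a *: u]addr0 lf lin0 // addr0. Qed.

Lemma linN (f : A -> A) u : linear f -> f (- u) = - f u.
Proof. by move=> lf; rewrite -scaleN1r linZ // scaleN1r. Qed.

Lemma linB (f : A -> A) u v : linear f -> f (u - v) = f u - f v.
Proof. by move=> lf; rewrite linD // linN. Qed.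

Lemma lin_comp (f g : A -> A) : linear f -> linear g -> linear (f \o g).
Proof. by move=> lf lg a u v /=; rewrite lg lf. Qed.

Lemma lin_iter (f : A -> A) m : linear f -> linear (iter m f).
Proof.
move=> lf; elim: m => [|m IH] a u v //=.
by rewrite IH lf.
Qed.

Lemma homog_iter (f : A -> A) m b x :
  (forall x, homog b x -> homog b (f x)) -> homog b x -> homog b (iter m f x).
Proof. by move=> hf hx; elim: m => [|m IH] //=; apply: hf. Qed.

Lemma iter_comm (f : A -> A) m x : iter m f (f x) = f (iter m f x).
Proof. by rewrite -iterSr iterS. Qed.

Lemma iter_mult (br : A -> A -> A) (f : A -> A) m :
  (forall x y, f (br x y) = br (f x) (f y)) ->
  forall x y, iter m f (br x y) = br (iter m f x) (iter m f y).
Proof. by move=> hm x y; elim: m => [|m IH] //=; rewrite IH hm. Qed.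

End Aux.

Theorem mainTheorem10 (K : closedFieldType) (A0 A1 : lmodType K)
  (pcharK : [pchar K] =i pred0)
  (br : (A0 * A1)%type -> (A0 * A1)%type -> (A0 * A1)%type)
  (alpha : (A0 * A1)%type -> (A0 * A1)%type) :
  HomMalcevSuper br alpha ->
  forall n : nat,
    HomMalcevSuper (derived_bracket br alpha n) (derived_twist alpha n).
Proof.
case=> [[bl1 bl2] ebr [la ea] [mul skew malc]] n.
set k := (2 ^ n - 1)%N.
set g := iter k alpha.
have lg : linear g by apply: lin_iter.
have eb : derived_bracket br alpha n = fun x y => g (br x y) by [].
have et : derived_twist alpha n = iter k.+1 alpha.
  by rewrite /derived_twist /k subn1 prednK // expn_gt0.
have eti : forall x, iter k.+1 alpha x = g (alpha x) by move=> x; rewrite iterSr.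
have gB : forall u v, g (u - v) = g u - g v by move=> u v; apply: linB.
have gD : forall u v, g (u + v) = g u + g v by move=> u v; apply: linD.
have gZ : forall (c : K) u, g (c *: u) = c *: g u by move=> c u; apply: linZ.
have gN : forall u, g (- u) = - g u by move=> u; apply: linN.
have gm : forall x y, g (br x y) = br (g x) (g y) by apply: iter_mult.
have ga : forall x, g (alpha x) = alpha (g x) by move=> x; apply: iter_comm.
have gJ : forall p q x y z, g (superJ br alpha p q x y z) =
    superJ br alpha p q (g x) (g y) (g z).
  by move=> p q x y z; rewrite /superJ !gB gZ !gm !ga.
have J' : forall p q x y z,
  superJ (fun x y => g (br x y)) (iter k.+1 alpha) p q x y z =
  g (g (superJ br alpha p q x y z)).
  move=> p q x y z; rewrite /superJ !eti !gB !gZ.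
  by rewrite !gm !ga.
rewrite eb et; split.
- split=> [x|y].
    by move=> a u v; rewrite bl1 gD gZ.
  by move=> a u v; rewrite bl2 gD gZ.
- by move=> bx by' x y hx hy; apply: homog_iter; [exact: ea | exact: ebr].
- split; first by apply: lin_iter.
  by move=> b x hx; apply: homog_iter; [exact: ea | exact: hx].
split.
- by move=> x y; rewrite !eti gm mul !ga.
- by move=> bx by' x y hx hy; rewrite (skew bx by') // gN gZ.
move=> bx by' bz bt x y z t hx hy hz ht.
rewrite !J' !eti.
have -> : g (alpha (g (alpha t))) = g (g (alpha (alpha t))) by rewrite !ga.
rewrite -!gm -!gJ.
by rewrite -!gZ -!gD (malc bx by' bz bt).
Qed.
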